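(* Let $1\le k\le n-1$. If $\lambda\in\Gamma^+_k\subset\mathbb R^n$ and $\lambda_i\le0$ for some index $i$, then $$\sum_{j\ne i}\frac{\partial\sigma_k(\lambda)}{\partial\lambda_j}\ \le\ (n-k)\,\frac{\partial\sigma_k(\lambda)}{\partial\lambda_i}.$$
   Context: $\sigma_k(\lambda)=\sum_{i_1<\dots<i_k}\lambda_{i_1}\cdots\lambda_{i_k}$ is the $k$-th elementary symmetric function; $\Gamma^+_k=\{\lambda\in\mathbb R^n:\sigma_j(\lambda)>0,\ 1\le j\le k\}$. *)

(* Defs.v *)
From mathcomp Require Import all_boot all_order all_algebra.
From mathcomp Require Import mpoly.
Set Implicit Arguments. Unset Strict Implicit. Unset Printing Implicit Defensive.
Import Order.TTheory GRing.Theory Num.Theory.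
Local Open Scope ring_scope.

Definition sigma {R : realFieldType} {n : nat} (k : nat) (lam : 'I_n -> R) : R :=
  (mesym n R k).@[lam].

Definition dsigma {R : realFieldType} {n : nat} (k : nat) (i : 'I_n)
    (lam : 'I_n -> R) : R :=
  ((mesym n R k)^`M(i)).@[lam].

Definition GammaPlus {R : realFieldType} {n : nat} (k : nat) (lam : 'I_n -> R) : Prop :=
  forall j : nat, (1 <= j)%N -> (j <= k)%N -> 0 < sigma j lam.

(* Main.v *)
Require Import Defs.
From mathcomp Require Import all_boot all_order all_algebra.
From mathcomp Require Import mpoly.
From mathcomp Require Import lra zify.
Import Order.TTheory GRing.Theory Num.Theory.
Local Open Scope ring_scope.

Section S.
Context {R : realFieldType} {n : nat} (lam : 'I_n -> R).

Definition P (h : {set 'I_n}) := \prod_(x in h) lam x.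
Definition dd (j : 'I_n) (m : nat) :=
  \sum_(h : {set 'I_n} | (j \notin h) && (#|h| == m)) P h.
Definition ee (m : nat) := \sum_(h : {set 'I_n} | #|h| == m) P h.

Lemma reidx (i : 'I_n) m (F : {set 'I_n} -> R) :
  \sum_(h : {set 'I_n} | (#|h| == m.+1) && (i \in h)) F h =
  \sum_(h : {set 'I_n} | (i \notin h) && (#|h| == m)) F (i |: h).
Proof.
rewrite (reindex_onto (fun h => i |: h) (fun h => h :\ i)) /=; last first.
  by move=> h /andP[_ hi]; rewrite setD1K.
apply: eq_bigl => h; rewrite setU11 andbT.
case: (boolP (i \in h)) => ih /=.
  apply/negbTE/negP => /andP[_ /eqP e].
  by move: ih; rewrite -e setD11.
rewrite setU1K // eqxx andbT cardsU1 ih /= add1n eqSS //.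
Qed.

Lemma prod_pow (h : {set 'I_n}) : \prod_x lam x ^+ (x \in h) = P h.
Proof. by rewrite /P [RHS]big_mkcond; apply: eq_bigr => x _; case: (x \in h). Qed.

Lemma sigmaE m : sigma m lam = ee m.
Proof.
rewrite /sigma mesymE (big_morph _ (mevalD lam) (meval0 lam)); apply: eq_bigr => h _.
by rewrite mevalX -prod_pow; apply: eq_bigr => x _; rewrite mnmE.
Qed.

Lemma dsigmaE k j : dsigma k.+1 j lam = dd j k.
Proof.
rewrite /dsigma mesymE (big_morph _ (@mderivD _ _ j) (@mderiv0 _ _ j)) (big_morph _ (mevalD lam) (meval0 lam)).
rewrite (bigID (fun h : {set 'I_n} => j \in h)) /= [X in _ + X]big1 ?addr0; last first.
  by move=> h /andP[_ jh]; rewrite mderivX mnmE (negbTE jh) scale0r meval0.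
rewrite reidx; apply: eq_bigr => h /andP[jh _].
rewrite mderivX mnmE setU11 scale1r mevalX -prod_pow; apply: eq_bigr => x _.
rewrite mnmBE /mesym1 !mnmE in_setU1; case: (eqVneq x j) => [->|nxj] /=; first by rewrite (negbTE jh).
by rewrite subn0.
Qed.

Lemma split_e i m : ee m.+1 = dd i m.+1 + lam i * dd i m.
Proof.
rewrite /ee (bigID (fun h : {set 'I_n} => i \in h)) /= addrC; congr (_ + _).
  by apply: eq_bigl => h; rewrite andbC.
rewrite reidx mulr_sumr; apply: eq_bigr => h /andP[ih _].
by rewrite /P big_setU1.
Qed.

Lemma dd0 i : dd i 0 = 1.
Proof.
rewrite /dd (big_pred1 set0); first by rewrite /P big_set0.
move=> h; rewrite cards_eq0 /=; case: eqVneq => [->|_]; by rewrite ?in_set0 ?andbF.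
Qed.

Lemma ee0 : ee 0 = 1.
Proof. rewrite /ee (big_pred1 set0); first by rewrite /P big_set0.
by move=> h; rewrite cards_eq0. Qed.

Lemma sum_dd m : \sum_j dd j m = (n - m)%:R * ee m.
Proof.
rewrite /dd (exchange_big_dep (fun h : {set 'I_n} => #|h| == m)) /=; last by move=> j h _ /andP[].
rewrite /ee mulr_sumr; apply: eq_bigr => h /eqP hm.
rewrite (eq_bigl (fun j => j \in ~: h)); last by move=> j; rewrite /= in_setC hm eqxx andbT.
rewrite sumr_const.
have ->: #|~: h| = (n - m)%N by rewrite -[n in (n - _)%N](card_ord n) -(cardsC h) hm addKn.
by rewrite mulr_natl.
Qed.

Lemma dd_pos k i : GammaPlus k lam -> lam i <= 0 -> forall m, (m <= k)%N -> 0 < dd i m.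
Proof.
move=> G li; elim=> [|m IH] mk; first by rewrite dd0.
have h1 := G m.+1 isT mk; rewrite sigmaE (split_e i) in h1.
have h2 := IH (ltnW mk).
have : lam i * dd i m <= 0 by rewrite mulr_le0_ge0 // ltW.
move: h1; set a := dd i m.+1; set b := lam i * dd i m => h1 h3.
lra.
Qed.
Lemma ee_split k i : GammaPlus k.+1 lam -> lam i <= 0 ->
  exists X, 0 <= X /\ ee k = dd i k + lam i * X.
Proof.
move=> G li; case: k G => [|k] G.
  by exists 0; rewrite mulr0 addr0 ee0 dd0.
exists (dd i k); split; first by rewrite ltW // (dd_pos _ _ G li) // ltnW.
exact: split_e.
Qed.
End S.

Theorem mainTheorem4 (R : realFieldType) (n k : nat) (lam : 'I_n -> R) (i : 'I_n) :
  (1 <= k)%N -> (k <= n - 1)%N ->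
  GammaPlus k lam -> lam i <= 0 ->
  \sum_(j < n | j != i) dsigma k j lam <= (n - k)%:R * dsigma k i lam.
Proof.
case: k => [//|k] _ kn G li.
have E : forall j, dsigma k.+1 j lam = dd lam j k by move=> j; rewrite dsigmaE.
rewrite (eq_bigr (fun j => dd lam j k)); last by move=> j _; rewrite E.
rewrite E.
have S := sum_dd lam k; rewrite (bigD1 i) //= in S.
have [X [X0 eX]] : exists X, 0 <= X /\ ee lam k = dd lam i k + lam i * X.
  exact: ee_split.
have N1 : (1 <= n - k)%N by lia.
have -> : (n - k.+1)%N = (n - k).-1 by rewrite subnS.
have -> : ((n - k).-1)%:R = (n - k)%:R - 1 :> R by rewrite -[in RHS](prednK N1) mulrSr addrK.
have : lam i * X <= 0 by rewrite mulr_le0_ge0.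
move: S; rewrite eX; set N := (n - k)%:R; set D := dd lam i k; set s := \sum_(j | _) _.
have N0 : 0 <= N by rewrite ler0n.
move=> S h.
have : N * (lam i * X) <= 0 by rewrite mulr_ge0_le0.
move=> h'. lra.
Qed.
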